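(* Let $K\in\mathbb{N}^+$, let $a_1,\dots,a_K\in\mathbb{R}$ be rationally independent, and let $g:\mathbb{R}\to\mathbb{R}$ be periodic with period $T$, i.e. $g(x+T)=g(x)$ for all $x$. Assume there exist $x_1,x_2\in\mathbb{R}$ with $0<x_2-x_1<T$ such that $g$ is continuous on $[x_1,x_2]$, and set $M_1=\min_{x\in[x_1,x_2]}g(x)$, $M_2=\max_{x\in[x_1,x_2]}g(x)$. Then the set $\{[g(wa_1),g(wa_2),\dots,g(wa_K)]^T: w\in\mathbb{R}\}$ is dense in $[M_1,M_2]^K$, i.e., for every $\boldsymbol{\xi}\in[M_1,M_2]^K$ and every $\varepsilon>0$ there is $w\in\mathbb{R}$ with $\max_{k}|g(wa_k)-\xi_k|<\varepsilon$.
   Context: Real numbers $a_1,\dots,a_K$ are rationally independent if whenever $\lambda_1,\dots,\lambda_K\in\mathbb{Q}$ satisfy $\sum_{k=1}^K\lambda_k a_k=0$, then $\lambda_1=\dots=\lambda_K=0$. *)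

(* Defs.v *)
From Stdlib Require Import Reals QArith Qreals.
Open Scope R_scope.

Definition rat_independent (K : nat) (a : nat -> R) : Prop :=
  forall lam : nat -> Q,
    sum_f_R0 (fun k => Q2R (lam k) * a k) (K - 1)%nat = 0 ->
    forall k, (k < K)%nat -> Q2R (lam k) = 0.

Definition continuous_on_interval (g : R -> R) (x1 x2 : R) : Prop :=
  forall x, x1 <= x <= x2 ->
    forall eps, eps > 0 -> exists delta, delta > 0 /\
      forall y, x1 <= y <= x2 -> Rabs (y - x) < delta -> Rabs (g y - g x) < eps.

(* Main.v *)
Require Import Defs.
From Stdlib Require Import Reals QArith Qreals.
From Stdlib Require Import Lra Lia ZArith Classical FunctionalExtensionality IndefiniteDescription.
Open Scope R_scope.

Fixpoint sumn (f : nat -> R) (n : nat) : R :=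
  match n with O => 0 | S n' => sumn f n' + f n' end.

Lemma sumn_ext f g n : (forall i, (i < n)%nat -> f i = g i) -> sumn f n = sumn g n.
Proof. induction n; simpl; intros H; auto. rewrite IHn; [|intros; apply H; lia]. rewrite H; auto. Qed.

Lemma sumn_add f g n : sumn (fun i => f i + g i) n = sumn f n + sumn g n.
Proof. induction n; simpl; [lra|]. rewrite IHn; lra. Qed.

Lemma sumn_scal a f n : sumn (fun i => a * f i) n = a * sumn f n.
Proof. induction n; simpl; [lra|]. rewrite IHn; lra. Qed.

Lemma sumn_const c n : sumn (fun _ => c) n = INR n * c.
Proof. induction n; simpl sumn; [simpl; lra|]. rewrite IHn, S_INR; lra. Qed.

Lemma sumn_zero f n : (forall i, (i < n)%nat -> f i = 0) -> sumn f n = 0.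
Proof. intros H; rewrite (sumn_ext f (fun _ => 0)); auto. rewrite sumn_const; lra. Qed.

Lemma sumn_nonneg f n : (forall i, (i<n)%nat -> 0 <= f i) -> 0 <= sumn f n.
Proof. induction n; simpl; intros H; [lra|]. assert (0 <= f n) by (apply H; lia).
 assert (0 <= sumn f n) by (apply IHn; intros; apply H; lia). lra. Qed.

Lemma sumn_ge_term f n j : (forall i, (i<n)%nat -> 0 <= f i) -> (j < n)%nat -> f j <= sumn f n.
Proof. induction n; simpl; intros H Hj; [lia|].
 assert (0 <= sumn f n) by (apply sumn_nonneg; intros; apply H; lia).
 destruct (Nat.eq_dec j n). subst; lra.
 assert (f j <= sumn f n) by (apply IHn; [intros; apply H; lia | lia]).
 assert (0 <= f n) by (apply H; lia). lra. Qed.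

Lemma sumn_abs f n C : (forall i, (i<n)%nat -> Rabs (f i) <= C) -> Rabs (sumn f n) <= INR n * C.
Proof. induction n; simpl sumn; intros H. rewrite Rabs_R0; simpl; lra.
 rewrite S_INR. eapply Rle_trans. apply Rabs_triang.
 assert (Rabs (f n) <= C) by (apply H; lia).
 assert (Rabs (sumn f n) <= INR n * C) by (apply IHn; intros; apply H; lia). lra. Qed.

Definition dot (d : nat) (c : nat -> Z) (x : nat -> R) : R :=
  sumn (fun k => IZR (c k) * x k) d.

Definition nzv (d : nat) (c : nat -> Z) : Prop := exists k, (k < d)%nat /\ c k <> 0%Z.

Lemma dot_lin d c a u v : dot d c (fun k => a * u k + v k) = a * dot d c u + dot d c v.
Proof. unfold dot. rewrite <- sumn_scal, <- sumn_add. apply sumn_ext; intros; ring. Qed.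

Lemma dot_addv d c u v : dot d c (fun k => u k + v k) = dot d c u + dot d c v.
Proof. unfold dot. rewrite <- sumn_add. apply sumn_ext; intros; ring. Qed.

Lemma dot_plus d c1 c2 x : dot d (fun k => (c1 k + c2 k)%Z) x = dot d c1 x + dot d c2 x.
Proof. unfold dot. rewrite <- sumn_add. apply sumn_ext; intros; rewrite plus_IZR; ring. Qed.

Lemma dot_minus d c1 c2 x : dot d (fun k => (c1 k - c2 k)%Z) x = dot d c1 x - dot d c2 x.
Proof. unfold dot. replace (sumn (fun k => IZR (c1 k) * x k) d - sumn (fun k => IZR (c2 k) * x k) d)
 with (sumn (fun k => IZR (c1 k) * x k) d + (-1) * sumn (fun k => IZR (c2 k) * x k) d) by ring.
 rewrite <- (sumn_scal (-1)), <- sumn_add.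
 apply sumn_ext; intros; rewrite minus_IZR; ring. Qed.

Lemma dot_zero d c x : (forall k, (k < d)%nat -> c k = 0%Z) -> dot d c x = 0.
Proof. intros H; unfold dot; apply sumn_zero; intros; rewrite H; auto; ring. Qed.

Definition ej (j : nat) : nat -> Z := fun k => if Nat.eqb k j then 1%Z else 0%Z.

Lemma dot_ej d j x : (j < d)%nat -> dot d (ej j) x = x j.
Proof. unfold dot, ej. induction d; intros H; [lia|]. simpl.
 destruct (Nat.eq_dec j d).
 - subst. rewrite Nat.eqb_refl. rewrite sumn_zero. ring.
   intros i Hi. destruct (Nat.eqb_spec i d); [lia|]. ring.
 - rewrite IHd by lia. destruct (Nat.eqb_spec d j); [lia|]. ring. Qed.

Inductive TP (d : nat) : ((nat -> R) -> R) -> R -> Prop :=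
| TPc : forall r, TP d (fun _ => r) r
| TPcos : forall r c phi, nzv d c -> TP d (fun x => r * cos (2 * PI * dot d c x + phi)) 0
| TPadd : forall F G mu nu, TP d F mu -> TP d G nu -> TP d (fun x => F x + G x) (mu + nu)
| TPext : forall F G mu, (forall x, F x = G x) -> TP d F mu -> TP d G mu.

Lemma TP_term d r c phi : exists l, TP d (fun x => r * cos (2 * PI * dot d c x + phi)) l.
Proof. destruct (classic (nzv d c)) as [H|H].
 - exists 0; constructor; auto.
 - exists (r * cos phi). apply TPext with (fun _ => r * cos phi); [|constructor].
   intros x. rewrite dot_zero. f_equal; f_equal; ring.
   intros k Hk. destruct (Z.eq_dec (c k) 0); auto. exfalso; apply H; exists k; auto. Qed.

Lemma TP_shift d F mu : TP d F mu -> forall v, TP d (fun x => F (fun k => x k + v k)) mu.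
Proof. induction 1; intros v.
 - constructor.
 - apply TPext with (fun x => r * cos (2 * PI * dot d c x + (2 * PI * dot d c v + phi))).
   intros x; rewrite dot_addv; f_equal; f_equal; ring. constructor; auto.
 - apply TPadd; auto.
 - apply TPext with (fun x => F (fun k => x k + v k)); auto. Qed.

Lemma TP_scal d F mu : TP d F mu -> forall a, TP d (fun x => a * F x) (a * mu).
Proof. induction 1; intros a.
 - constructor.
 - apply TPext with (fun x => (a * r) * cos (2 * PI * dot d c x + phi)).
   intros; ring. replace (a * 0) with 0 by ring. constructor; auto.
 - apply TPext with (fun x => a * F x + a * G x). intros; ring.
   replace (a * (mu + nu)) with (a * mu + a * nu) by ring. constructor; auto.
 - apply TPext with (fun x => a * F x); auto. intros; rewrite H; auto. Qed.

Lemma cos_prod A B : cos A * cos B = / 2 * cos (A + B) + / 2 * cos (A - B).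
Proof. rewrite cos_plus, cos_minus. field. Qed.

Lemma TP_cos_mul d r c phi G nu : TP d G nu ->
  exists l, TP d (fun x => r * cos (2 * PI * dot d c x + phi) * G x) l.
Proof. induction 1.
 - destruct (TP_term d (r * r0) c phi) as [l Hl]. exists l.
   eapply TPext; [|exact Hl]. intros; simpl; ring.
 - rename r0 into s, c0 into c2, phi0 into phi2.
   destruct (TP_term d (r * s / 2) (fun k => (c k + c2 k)%Z) (phi + phi2)) as [l1 H1].
   destruct (TP_term d (r * s / 2) (fun k => (c k - c2 k)%Z) (phi - phi2)) as [l2 H2].
   exists (l1 + l2). eapply TPext; [|apply TPadd; [exact H1|exact H2]].
   intros x; simpl. rewrite dot_plus, dot_minus.
   replace (r * cos (2 * PI * dot d c x + phi) * (s * cos (2 * PI * dot d c2 x + phi2)))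
     with (r * s * (cos (2 * PI * dot d c x + phi) * cos (2 * PI * dot d c2 x + phi2))) by ring.
   rewrite cos_prod.
   replace (2 * PI * dot d c x + phi + (2 * PI * dot d c2 x + phi2)) with
     (2 * PI * (dot d c x + dot d c2 x) + (phi + phi2)) by ring.
   replace (2 * PI * dot d c x + phi - (2 * PI * dot d c2 x + phi2)) with
     (2 * PI * (dot d c x - dot d c2 x) + (phi - phi2)) by ring. field.
 - destruct IHTP1 as [l1 H1], IHTP2 as [l2 H2]. exists (l1 + l2).
   eapply TPext; [|apply TPadd; [exact H1|exact H2]]. intros; simpl; ring.
 - destruct IHTP as [l Hl]; exists l. eapply TPext; [|exact Hl]. intros; simpl; rewrite H; auto. Qed.

Lemma TP_mul d F mu G nu : TP d F mu -> TP d G nu -> exists l, TP d (fun x => F x * G x) l.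
Proof. intros HF HG; revert G nu HG; induction HF; intros G0 nu0 HG.
 - exists (r * nu0). apply TP_scal; auto.
 - apply TP_cos_mul with nu0; auto.
 - destruct (IHHF1 _ _ HG) as [l1 H1], (IHHF2 _ _ HG) as [l2 H2]. exists (l1 + l2).
   eapply TPext; [|apply TPadd; [exact H1|exact H2]]. intros; simpl; ring.
 - destruct (IHHF _ _ HG) as [l Hl]; exists l. eapply TPext; [|exact Hl]. intros; simpl; rewrite H; auto. Qed.

Lemma TP_sumn d (F : nat -> (nat -> R) -> R) mu n :
  (forall i, (i < n)%nat -> TP d (F i) (mu i)) -> TP d (fun x => sumn (fun i => F i x) n) (sumn mu n).
Proof. induction n; intros H; simpl. constructor. apply TPadd. apply IHn; intros; apply H; lia. apply H; lia. Qed.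

Lemma cos_sum_tele th psi M :
  2 * sin (PI * th) * sumn (fun m => cos (2 * PI * (INR m * th) + psi)) M =
  sin (2 * PI * (INR M * th) + psi - PI * th) - sin (psi - PI * th).
Proof. induction M; simpl sumn. simpl INR. replace (2 * PI * (0 * th) + psi - PI * th) with (psi - PI * th) by ring. ring.
 rewrite Rmult_plus_distr_l, IHM, S_INR.
 assert (E: 2 * sin (PI * th) * cos (2 * PI * (INR M * th) + psi) =
   sin (2 * PI * (INR M * th) + psi + PI * th) - sin (2 * PI * (INR M * th) + psi - PI * th)).
 { rewrite sin_plus, sin_minus. ring. }
 rewrite E. replace (2 * PI * ((INR M + 1) * th) + psi - PI * th) with (2 * PI * (INR M * th) + psi + PI * th) by ring.
 ring. Qed.

Lemma cos_sum_bound th psi M : sin (PI * th) <> 0 ->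
  Rabs (sumn (fun m => cos (2 * PI * (INR m * th) + psi)) M) <= 1 / Rabs (sin (PI * th)).
Proof. intros H. assert (Hp : 0 < Rabs (sin (PI * th))) by (apply Rabs_pos_lt; auto).
 assert (E := cos_sum_tele th psi M).
 set (S := sumn _ M) in *.
 assert (Rabs (2 * sin (PI * th) * S) <= 2).
 { rewrite E. eapply Rle_trans. apply Rabs_triang. rewrite Rabs_Ropp.
   destruct (SIN_bound (2 * PI * (INR M * th) + psi - PI * th)).
   destruct (SIN_bound (psi - PI * th)).
   assert (Rabs (sin (2 * PI * (INR M * th) + psi - PI * th)) <= 1) by (apply Rabs_le; lra).
   assert (Rabs (sin (psi - PI * th)) <= 1) by (apply Rabs_le; lra). lra. }
 rewrite !Rabs_mult in H0. rewrite Rabs_right in H0 by lra.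
 apply (Rmult_le_reg_l (Rabs (sin (PI * th)))); auto. field_simplify; [|lra]. nra. Qed.

Definition nonres (d : nat) (b : nat -> R) : Prop :=
  forall c, nzv d c -> forall n : Z, dot d c b <> IZR n.

Lemma AV d b : nonres d b -> forall F mu, TP d F mu -> forall z, exists C, forall M,
  Rabs (sumn (fun m => F (fun k => INR m * b k + z k)) M - INR M * mu) <= C.
Proof. intros Hb F mu HT; induction HT; intros z.
 - exists 0; intros M. rewrite sumn_const. replace (INR M * r - INR M * r) with 0 by ring. rewrite Rabs_R0; lra.
 - set (th := dot d c b).
   assert (Hs : sin (PI * th) <> 0).
   { intros E. apply sin_eq_0_0 in E. destruct E as [k Hk]. apply (Hb c H k).
     fold th. assert (PI <> 0) by (pose PI_RGT_0; lra). apply (Rmult_eq_reg_l PI); auto. rewrite Hk; ring. }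
   exists (Rabs r * (1 / Rabs (sin (PI * th)))). intros M.
   rewrite (sumn_ext _ (fun m => r * cos (2 * PI * (INR m * th) + (2 * PI * dot d c z + phi)))).
   rewrite sumn_scal. replace (INR M * 0) with 0 by ring. rewrite Rminus_0_r, Rabs_mult.
   apply Rmult_le_compat_l. apply Rabs_pos. apply cos_sum_bound; auto.
   intros i _. rewrite dot_lin. unfold th. f_equal. f_equal. ring.
 - destruct (IHHT1 z) as [C1 H1], (IHHT2 z) as [C2 H2]. exists (C1 + C2). intros M.
   rewrite sumn_add. specialize (H1 M); specialize (H2 M).
   pose proof (Rabs_triang (sumn (fun m => F (fun k => INR m * b k + z k)) M - INR M * mu)
     (sumn (fun m => G (fun k => INR m * b k + z k)) M - INR M * nu)).
   replace (sumn (fun m => F (fun k => INR m * b k + z k)) M + sumn (fun m => G (fun k => INR m * b k + z k)) M - INR M * (mu + nu))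
    with (sumn (fun m => F (fun k => INR m * b k + z k)) M - INR M * mu + (sumn (fun m => G (fun k => INR m * b k + z k)) M - INR M * nu)) by ring.
   lra.
 - destruct (IHHT z) as [C HC]. exists C; intros M.
   rewrite (sumn_ext _ (fun m => F (fun k => INR m * b k + z k))); [apply HC|]. intros; rewrite H; auto. Qed.

Lemma bound_le (mu s C : R) : (forall M : nat, INR M * mu <= INR M * s + C) -> mu <= s.
Proof. intros H. destruct (Rle_dec mu s) as [|Hn]; auto. exfalso.
 assert (Hp : 0 < mu - s) by lra.
 destruct (archimed (Rabs C / (mu - s))) as [H1 _].
 assert (Hz : (0 <= up (Rabs C / (mu - s)))%Z).
 { apply le_IZR. assert (0 <= Rabs C / (mu - s)) by (unfold Rdiv; apply Rmult_le_pos; [apply Rabs_pos|left; apply Rinv_0_lt_compat; lra]). lra. }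
 specialize (H (Z.to_nat (up (Rabs C / (mu - s))))).
 rewrite INR_IZR_INZ, Z2Nat.id in H by auto.
 set (u := IZR (up (Rabs C / (mu - s)))) in *.
 assert (Rabs C < u * (mu - s)).
 { apply (Rmult_lt_compat_r (mu - s)) in H1; auto. unfold Rdiv in H1. rewrite Rmult_assoc, Rinv_l, Rmult_1_r in H1 by lra. lra. }
 pose proof (Rle_abs C). nra. Qed.

Definition kern1 (t : R) : R := (1 + cos (2 * PI * t)) / 2.

Lemma kern_bounds t : 0 <= kern1 t <= 1.
Proof. unfold kern1; destruct (COS_bound (2 * PI * t)); lra. Qed.

Lemma cos_Zperiod x k : cos (x + 2 * IZR k * PI) = cos x.
Proof. destruct (Z_le_gt_dec 0 k).
 - rewrite <- (Z2Nat.id k) by auto. rewrite <- INR_IZR_INZ. apply cos_period.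
 - replace k with (- Z.of_nat (Z.to_nat (- k)))%Z by lia. rewrite opp_IZR, <- INR_IZR_INZ.
   set (m := INR _). rewrite <- (cos_period (x + 2 * - m * PI) (Z.to_nat (-k))). fold m. f_equal; ring. Qed.

Lemma nearest x : exists p : Z, -1/2 <= x - IZR p < 1/2.
Proof. destruct (archimed (x + 1/2)) as [H1 H2]. exists (up (x + 1/2) - 1)%Z.
 rewrite minus_IZR. lra. Qed.

Lemma cos_le_abs y a : Rabs y <= a -> a <= PI -> cos a <= cos y.
Proof. intros H1 H2. pose proof (Rabs_pos y).
 destruct (Rcase_abs y).
 - rewrite Rabs_left in H1 by auto. rewrite <- (cos_neg y). apply (cos_decr_1 (-y) a); lra.
 - rewrite Rabs_right in H1 by auto. apply (cos_decr_1 y a); lra. Qed.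

Lemma kern_high x delta : 0 < delta <= 1/2 -> ~ (exists n : Z, Rabs (x - IZR n) < delta) ->
  kern1 x <= (1 + cos (2 * PI * delta)) / 2.
Proof. intros Hd Hn. destruct (nearest x) as [p Hp]. unfold kern1.
 assert (Hy : delta <= Rabs (x - IZR p)). { destruct (Rle_dec delta (Rabs (x - IZR p))); auto. exfalso; apply Hn; exists p; lra. }
 replace (2 * PI * x) with (2 * PI * (x - IZR p) + 2 * IZR p * PI) by ring. rewrite cos_Zperiod.
 assert (cos (2 * PI * (x - IZR p)) <= cos (2 * PI * delta)); [|lra].
 pose proof PI_RGT_0.
 rewrite <- (cos_neg (2 * PI * (x - IZR p))).
 destruct (Rcase_abs (x - IZR p)).
 - rewrite Rabs_left in Hy by auto. apply cos_decr_1; nra.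
 - rewrite Rabs_right in Hy by auto. rewrite cos_neg. apply cos_decr_1; nra. Qed.

Lemma kern_low x (n : nat) : (0 < n)%nat -> exists i, (i < n)%nat /\
  (1 + cos (PI / INR n)) / 2 <= kern1 (x + INR i / INR n).
Proof. intros Hn. assert (Hn' : 0 < INR n) by (apply lt_0_INR; auto).
 destruct (nearest (INR n * x)) as [p Hp].
 set (nz := Z.of_nat n).
 assert (Hnz : (0 < nz)%Z) by (unfold nz; lia).
 set (i := ((- p) mod nz)%Z).
 assert (Hi : (0 <= i < nz)%Z) by (apply Z.mod_pos_bound; auto).
 pose proof (Z.div_mod (- p) nz ltac:(lia)) as Hdm. fold i in Hdm. set (q := ((- p) / nz)%Z) in *.
 exists (Z.to_nat i). split. lia.
 rewrite (INR_IZR_INZ (Z.to_nat i)), Z2Nat.id by lia. unfold kern1.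
 assert (Hi' : IZR i = - IZR p - INR n * IZR q).
 { rewrite INR_IZR_INZ. fold nz. rewrite <- mult_IZR, <- opp_IZR, <- minus_IZR. f_equal. lia. }
 replace (2 * PI * (x + IZR i / INR n)) with (2 * PI * ((INR n * x - IZR p) / INR n) + 2 * IZR (- q) * PI).
 2:{ rewrite Hi', opp_IZR. field. lra. }
 rewrite cos_Zperiod.
 assert (cos (PI / INR n) <= cos (2 * PI * ((INR n * x - IZR p) / INR n))); [|lra].
 pose proof PI_RGT_0.
 apply cos_le_abs.
 - rewrite Rabs_mult, Rabs_pos_eq by lra. unfold Rdiv. rewrite Rabs_mult, (Rabs_pos_eq (/ INR n)) by (left; apply Rinv_0_lt_compat; lra).
   assert (Rabs (INR n * x - IZR p) <= 1/2) by (apply Rabs_le; lra).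
   assert (0 < / INR n) by (apply Rinv_0_lt_compat; lra).
   assert (Rabs (INR n * x - IZR p) * / INR n <= 1/2 * / INR n) by (apply Rmult_le_compat_r; lra). nra.
 - assert (1 <= INR n) by (apply (le_INR 1); lia). unfold Rdiv.
   assert (/ INR n <= 1). { rewrite <- Rinv_1. apply Rinv_le_contravar; lra. }
   assert (0 < / INR n) by (apply Rinv_0_lt_compat; lra). nra. Qed.

Fixpoint Pk (j : nat) (x : nat -> R) : R :=
  match j with O => 1 | S j' => Pk j' x * kern1 (x j') end.

Lemma Pk_bounds j x : 0 <= Pk j x <= 1.
Proof. induction j; simpl; [lra|]. destruct (kern_bounds (x j)). nra. Qed.

Lemma Pk_high j x r : 0 <= r -> (exists k, (k < j)%nat /\ kern1 (x k) <= r) -> Pk j x <= r.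
Proof. induction j; intros Hr [k [Hk Hk2]]; [lia|]. simpl.
 destruct (kern_bounds (x j)). destruct (Pk_bounds j x).
 destruct (Nat.eq_dec k j). subst. nra.
 assert (Pk j x <= r) by (apply IHj; auto; exists k; split; auto; lia). nra. Qed.

Lemma Pk_low j x q : 0 <= q -> (forall k, (k < j)%nat -> q <= kern1 (x k)) -> q ^ j <= Pk j x.
Proof. induction j; intros Hq H; simpl; [lra|].
 assert (q ^ j <= Pk j x) by (apply IHj; auto). assert (q <= kern1 (x j)) by (apply H; lia).
 assert (0 <= q ^ j) by (apply pow_le; auto). rewrite Rmult_comm. apply Rmult_le_compat; auto. Qed.

Lemma TP_kern d j : (j < d)%nat -> TP d (fun x => kern1 (x j)) (1/2).
Proof. intros H. apply TPext with (fun x => 1/2 + (1/2) * cos (2 * PI * dot d (ej j) x + 0)).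
 intros x. rewrite dot_ej by auto. unfold kern1. rewrite Rplus_0_r. field.
 assert (HH : TP d (fun x => 1/2 + (1/2) * cos (2 * PI * dot d (ej j) x + 0)) (1/2 + 0)).
 { apply (TPadd d (fun _ => 1/2) (fun x => (1/2) * cos (2 * PI * dot d (ej j) x + 0))). constructor. constructor.
   exists j; split; auto. unfold ej. rewrite Nat.eqb_refl. lia. }
 rewrite Rplus_0_r in HH. exact HH. Qed.

Lemma TP_Pk d j : (j <= d)%nat -> exists mu, TP d (Pk j) mu.
Proof. induction j; intros H. exists 1. apply TPext with (fun _ => 1); auto. constructor.
 destruct IHj as [mu Hmu]. lia.
 destruct (TP_mul _ _ _ _ _ Hmu (TP_kern d j ltac:(lia))) as [l Hl]. exists l.
 eapply TPext; [|exact Hl]. intros; simpl; auto. Qed.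

Lemma TP_pow d F mu N : TP d F mu -> exists l, TP d (fun x => F x ^ N) l.
Proof. intros H. induction N. exists 1. apply TPext with (fun _ => 1); auto. constructor.
 destruct IHN as [l Hl]. destruct (TP_mul _ _ _ _ _ H Hl) as [l' Hl']. exists l'.
 eapply TPext; [|exact Hl']. intros; simpl; auto. Qed.

Fixpoint GS (n j : nat) (H : (nat -> R) -> R) (x : nat -> R) : R :=
  match j with
  | O => H x
  | S j' => sumn (fun i => GS n j' H (fun k => x k + (if Nat.eqb k j' then INR i / INR n else 0))) n
  end.

Lemma TP_GS d n H mu : TP d H mu -> forall j, TP d (GS n j H) (INR n ^ j * mu).
Proof. intros HT j. induction j; simpl.
 - rewrite Rmult_1_l. eapply TPext; [|exact HT]. intros; simpl; auto.
 - replace (INR n * INR n ^ j * mu) with (sumn (fun _ => INR n ^ j * mu) n) by (rewrite sumn_const; ring).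
   apply (TP_sumn d (fun i x => GS n j H (fun k => x k + (if Nat.eqb k j then INR i / INR n else 0)))).
   intros i _. apply (TP_shift d (GS n j H)). auto. Qed.

Lemma GS_nonneg n j H x : (forall y, 0 <= H y) -> 0 <= GS n j H x.
Proof. revert x; induction j; intros x Hp; simpl; auto. apply sumn_nonneg; intros; auto. Qed.

Lemma GS_low n j H (idx : nat -> nat) : (forall y, 0 <= H y) -> (forall k, (k < j)%nat -> (idx k < n)%nat) ->
  forall x, H (fun k => x k + (if Nat.ltb k j then INR (idx k) / INR n else 0)) <= GS n j H x.
Proof. intros Hp; induction j; intros Hi x; simpl.
 - right. f_equal. apply functional_extensionality; intros k. rewrite Rplus_0_r; auto.
 - eapply Rle_trans; [|apply (sumn_ge_term _ n (idx j))]; [| intros; apply GS_nonneg; auto | apply Hi; lia].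
   eapply Rle_trans; [|apply IHj; intros; apply Hi; lia].
   right. f_equal. apply functional_extensionality; intros k.
   destruct (Nat.ltb_spec k (S j)), (Nat.ltb_spec k j), (Nat.eqb_spec k j); subst; try lia; ring. Qed.

Lemma sumn_le f g n : (forall i, (i<n)%nat -> f i <= g i) -> sumn f n <= sumn g n.
Proof. induction n; simpl; intros H; [lra|]. assert (f n <= g n) by (apply H; lia).
 assert (sumn f n <= sumn g n) by (apply IHn; intros; apply H; lia). lra. Qed.

Lemma bernoulli_down a d : 0 <= a <= 1 -> 1 - INR d * a <= (1 - a) ^ d.
Proof. intros H. induction d. simpl; lra. rewrite S_INR. simpl pow.
 assert (0 <= (1 - a) ^ d) by (apply pow_le; lra). pose proof (pos_INR d). nra. Qed.

Lemma choose_n (d : nat) (r : R) : 0 <= r < 1 -> exists n : nat, (0 < n)%nat /\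
  r < ((1 + cos (PI / INR n)) / 2) ^ d.
Proof. intros Hr. pose proof (continuity_cos 0) as Hc.
 unfold continuity_pt, continue_in, limit1_in, limit_in in Hc. simpl in Hc. unfold R_dist in Hc.
 assert (Hd : 0 <= INR d) by apply pos_INR.
 set (e := (1 - r) / (INR d + 1)).
 assert (He : 0 < e) by (unfold e; apply Rdiv_lt_0_compat; lra).
 destruct (Hc e He) as [alp [Ha Hx]].
 pose proof PI_RGT_0.
 destruct (archimed (PI / alp)) as [Hu _].
 assert (Hu0 : (0 <= up (PI / alp))%Z). { apply le_IZR. assert (0 < PI / alp) by (apply Rdiv_lt_0_compat; lra). lra. }
 set (n := S (Z.to_nat (up (PI / alp)))).
 assert (Hn : PI / alp < INR n). { unfold n. rewrite S_INR, INR_IZR_INZ, Z2Nat.id by auto. lra. }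
 assert (Hn0 : 0 < INR n) by (unfold n; apply lt_0_INR; lia).
 exists n. split. unfold n; lia.
 assert (Hpn : 0 < PI / INR n) by (apply Rdiv_lt_0_compat; lra).
 assert (Hlt : PI / INR n < alp).
 { assert (PI < INR n * alp).
   { apply (Rmult_lt_compat_r alp) in Hn; auto. unfold Rdiv in Hn. rewrite Rmult_assoc, Rinv_l, Rmult_1_r in Hn by lra. auto. }
   apply (Rmult_lt_reg_r (INR n)); auto. unfold Rdiv. rewrite Rmult_assoc, Rinv_l, Rmult_1_r by lra. lra. }
 specialize (Hx (PI / INR n)). rewrite cos_0 in Hx.
 assert (Hcl : Rabs (cos (PI / INR n) - 1) < e). { apply Hx. split. split; [exact I|]. apply Rlt_not_eq. exact Hpn. rewrite Rminus_0_r, Rabs_pos_eq; lra. }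
 apply Rabs_def2 in Hcl. destruct (COS_bound (PI / INR n)).
 set (q := (1 + cos (PI / INR n)) / 2).
 assert (Hb := bernoulli_down (1 - q) d). replace (1 - (1 - q)) with q in Hb by ring.
 assert (1 - INR d * (1 - q) <= q ^ d) by (apply Hb; unfold q; lra).
 assert (INR d * (1 - q) < 1 - r).
 { assert (1 - q < e / 2) by (unfold q; lra).
   assert (INR d * (1 - q) <= INR d * (e / 2)) by (apply Rmult_le_compat_l; [auto|lra]).
   assert (INR d * e < 1 - r) by (unfold e; apply (Rmult_lt_reg_r (INR d + 1)); [lra|]; field_simplify; nra).
   nra. }
 lra. Qed.

Lemma abs_le_inv x C : Rabs x <= C -> - C <= x <= C.
Proof. intros H. pose proof (Rabs_Ropp x). pose proof (Rle_abs (-x)). pose proof (Rle_abs x). lra. Qed.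

Theorem DK d b : nonres d b -> forall (z : nat -> R) delta, 0 < delta ->
  exists m : nat, forall k, (k < d)%nat -> exists n : Z, Rabs (INR m * b k + z k - IZR n) < delta.
Proof. intros Hb z delta Hdel.
 set (de := Rmin delta (1/2)).
 assert (Hde : 0 < de <= 1/2) by (unfold de; split; [apply Rmin_glb_lt; lra | apply Rmin_r]).
 assert (Hde2 : de <= delta) by (unfold de; apply Rmin_l).
 set (r := (1 + cos (2 * PI * de)) / 2).
 pose proof PI_RGT_0.
 assert (Hr : 0 <= r < 1).
 { unfold r. destruct (COS_bound (2 * PI * de)). split. lra.
   assert (cos (2 * PI * de) < cos 0) by (apply cos_decreasing_1; nra). rewrite cos_0 in H2. lra. }
 destruct (choose_n d r Hr) as [n [Hn Hq]].
 set (q := (1 + cos (PI / INR n)) / 2) in *.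
 assert (Hq0 : 0 <= q) by (unfold q; destruct (COS_bound (PI / INR n)); lra).
 set (Q := q ^ d) in *.
 assert (HQ : 0 < Q) by lra.
 assert (Hn0 : 0 < INR n) by (apply lt_0_INR; auto).
 assert (Hnd : 0 < INR n ^ d) by (apply pow_lt; auto).
 destruct (pow_lt_1_zero (r / Q)) with (y := / INR n ^ d) as [N HN].
 { rewrite Rabs_pos_eq. apply (Rmult_lt_reg_r Q); auto. unfold Rdiv; rewrite Rmult_assoc, Rinv_l; lra.
   unfold Rdiv; apply Rmult_le_pos; [lra| left; apply Rinv_0_lt_compat; auto]. }
 { apply Rinv_0_lt_compat; auto. }
 specialize (HN N (le_n N)).
 assert (Hkey : INR n ^ d * r ^ N < Q ^ N).
 { assert (E : r ^ N = (r / Q) ^ N * Q ^ N).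
   { rewrite <- Rpow_mult_distr. f_equal. field. lra. }
   rewrite E. rewrite Rabs_pos_eq in HN by (apply pow_le; unfold Rdiv; apply Rmult_le_pos; [lra| left; apply Rinv_0_lt_compat; auto]).
   assert (0 < Q ^ N) by (apply pow_lt; auto).
   apply (Rmult_lt_compat_l (INR n ^ d)) in HN; auto. rewrite Rinv_r in HN by lra. nra. }
 set (F := fun x => Pk d x ^ N).
 assert (HF0 : forall x, 0 <= F x) by (intros; unfold F; apply pow_le; apply Pk_bounds).
 destruct (TP_Pk d d (le_n d)) as [mu0 HP].
 destruct (TP_pow d _ _ N HP) as [mu HFT]. fold F in HFT.
 apply NNPP. intros Hno.
 assert (Hup : forall m : nat, F (fun k => INR m * b k + z k) <= r ^ N).
 { intros m. unfold F. apply pow_incr. split. apply Pk_bounds. apply Pk_high. lra.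
   apply NNPP; intros Hc. apply Hno. exists m. intros k Hk. apply NNPP; intros Hk2. apply Hc. exists k. split; auto.
   apply kern_high; auto. intros [n0 Hn0']. apply Hk2. exists n0. lra. }
 destruct (AV d b Hb F mu HFT z) as [C HC].
 assert (Hmu : mu <= r ^ N).
 { apply (bound_le mu (r ^ N) C). intros M. specialize (HC M). apply abs_le_inv in HC.
   assert (sumn (fun m => F (fun k => INR m * b k + z k)) M <= INR M * r ^ N).
   { rewrite <- sumn_const. apply sumn_le; intros; apply Hup. }
   lra. }
 assert (HG := TP_GS d n F mu HFT d).
 assert (Hlow : forall y, Q ^ N <= GS n d F y).
 { intros y.
   set (idx := fun k => proj1_sig (constructive_indefinite_description _ (kern_low (y k) n Hn))).
   assert (Hidx : forall k, (idx k < n)%nat /\ q <= kern1 (y k + INR (idx k) / INR n)).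
   { intros k. unfold idx. destruct (constructive_indefinite_description _ _) as [i Hi]. simpl. exact Hi. }
   eapply Rle_trans; [|apply (GS_low n d F idx HF0)]; [| intros k _; apply Hidx].
   unfold F. apply pow_incr. split. lra. unfold Q. apply Pk_low; auto.
   intros k Hk. destruct (Nat.ltb_spec k d); [|lia]. apply Hidx. }
 destruct (AV d b Hb _ _ HG (fun _ => 0)) as [C' HC'].
 assert (HQN : Q ^ N <= INR n ^ d * mu).
 { apply (bound_le (Q ^ N) (INR n ^ d * mu) C'). intros M. specialize (HC' M). apply abs_le_inv in HC'.
   assert (INR M * Q ^ N <= sumn (fun m => GS n d F (fun k => INR m * b k + 0)) M).
   { rewrite <- sumn_const. apply sumn_le; intros; apply Hlow. }
   lra. }
 assert (INR n ^ d * mu <= INR n ^ d * r ^ N) by (apply Rmult_le_compat_l; lra).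
 lra. Qed.

Definition clamp (x1 x2 x : R) := Rmax x1 (Rmin x x2).

Lemma clamp_in x1 x2 x : x1 <= x2 -> x1 <= clamp x1 x2 x <= x2.
Proof. intros H; unfold clamp, Rmax, Rmin; repeat destruct Rle_dec; lra. Qed.

Lemma clamp_id x1 x2 x : x1 <= x <= x2 -> clamp x1 x2 x = x.
Proof. intros H; unfold clamp, Rmax, Rmin; repeat destruct Rle_dec; lra. Qed.

Lemma clamp_lip x1 x2 x y : x1 <= x2 -> Rabs (clamp x1 x2 x - clamp x1 x2 y) <= Rabs (x - y).
Proof. intros H; unfold clamp, Rmax, Rmin; repeat destruct Rle_dec; unfold Rabs; repeat destruct Rcase_abs; lra. Qed.

Lemma clamp_cont g x1 x2 : x1 <= x2 -> continuous_on_interval g x1 x2 ->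
  forall a, continuity_pt (fun x => g (clamp x1 x2 x)) a.
Proof. intros H12 Hc a. unfold continuity_pt, continue_in, limit1_in, limit_in; simpl; unfold R_dist.
 intros eps He. destruct (Hc (clamp x1 x2 a) (clamp_in x1 x2 a H12) eps He) as [de [Hde Hd]].
 exists de; split; auto. intros x [_ Hx]. apply Hd. apply clamp_in; auto.
 eapply Rle_lt_trans; [apply clamp_lip; auto| auto]. Qed.

Lemma exists_val g x1 x2 y1 y2 v : x1 <= x2 -> continuous_on_interval g x1 x2 ->
  x1 <= y1 <= x2 -> x1 <= y2 <= x2 -> g y1 <= v <= g y2 -> exists y, x1 <= y <= x2 /\ g y = v.
Proof. intros H12 Hc Hy1 Hy2 Hv.
 set (h := fun x => g (clamp x1 x2 x)).
 assert (Hh : continuity h) by (intros a; apply clamp_cont; auto).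
 assert (E1 : h y1 = g y1) by (unfold h; rewrite clamp_id; auto).
 assert (E2 : h y2 = g y2) by (unfold h; rewrite clamp_id; auto).
 destruct (Req_dec v (g y1)) as [e|n1]. exists y1; auto.
 destruct (Req_dec v (g y2)) as [e|n2]. exists y2; auto.
 destruct (Rtotal_order y1 y2) as [Hlt|[Heq|Hgt]].
 - destruct (IVT (fun x => h x - v) y1 y2) as [y [Hy Hy']]; auto.
   + apply continuity_minus; auto. apply continuity_const. intros ? ?; auto.
   + simpl; lra.
   + simpl; lra.
   + exists y; split. lra. unfold h in Hy'; rewrite clamp_id in Hy' by lra. lra.
 - subst; lra.
 - destruct (IVT (fun x => v - h x) y2 y1) as [y [Hy Hy']]; auto.
   + apply continuity_minus; auto. apply continuity_const. intros ? ?; auto.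
   + simpl; lra.
   + simpl; lra.
   + exists y; split. lra. unfold h in Hy'; rewrite clamp_id in Hy' by lra. lra. Qed.

Lemma interior_pt g x1 x2 y eps : x1 < x2 -> continuous_on_interval g x1 x2 -> x1 <= y <= x2 -> 0 < eps ->
  exists t, x1 < t < x2 /\ Rabs (g t - g y) < eps.
Proof. intros H12 Hc Hy He. destruct (Hc y Hy eps He) as [de [Hde Hd]].
 set (lam := Rmin 1 (de / (x2 - x1 + 1)) / 2).
 assert (Hl0 : 0 < lam). { unfold lam. apply Rdiv_lt_0_compat; [|lra]. apply Rmin_glb_lt; [lra|]. apply Rdiv_lt_0_compat; lra. }
 assert (Hl1 : lam <= 1/2). { unfold lam. assert (Rmin 1 (de / (x2 - x1 + 1)) <= 1) by apply Rmin_l. lra. }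
 assert (Hl2 : lam * (x2 - x1 + 1) < de).
 { unfold lam. assert (Rmin 1 (de / (x2 - x1 + 1)) <= de / (x2 - x1 + 1)) by apply Rmin_r.
   assert (Rmin 1 (de / (x2 - x1 + 1)) * (x2 - x1 + 1) <= de).
   { apply (Rmult_le_compat_r (x2 - x1 + 1)) in H; [|lra]. unfold Rdiv in H. rewrite Rmult_assoc, Rinv_l, Rmult_1_r in H by lra. auto. }
   assert (0 < Rmin 1 (de / (x2 - x1 + 1))) by (apply Rmin_glb_lt; [lra|]; apply Rdiv_lt_0_compat; lra).
   nra. }
 set (mid := (x1 + x2) / 2).
 exists (y + lam * (mid - y)). split. unfold mid; split; nra.
 apply Hd. unfold mid; split; nra.
 replace (y + lam * (mid - y) - y) with (lam * (mid - y)) by ring.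
 rewrite Rabs_mult, Rabs_pos_eq by lra.
 assert (Rabs (mid - y) <= x2 - x1 + 1) by (apply Rabs_le; unfold mid; lra).
 nra. Qed.

Lemma fin_min (P : nat -> R -> Prop) : (forall k a a', 0 < a' <= a -> P k a -> P k a') ->
  forall K, (forall k, (k < K)%nat -> exists a, 0 < a /\ P k a) -> exists a, 0 < a /\ forall k, (k < K)%nat -> P k a.
Proof. intros Hm K. induction K; intros H. exists 1; split; [lra|intros; lia].
 destruct IHK as [a [Ha Hk]]. intros; apply H; lia.
 destruct (H K (Nat.lt_succ_diag_r K)) as [b [Hb HK]].
 exists (Rmin a b). assert (0 < Rmin a b) by (apply Rmin_glb_lt; auto). split; auto.
 intros k Hk'. destruct (Nat.eq_dec k K).
 - subst. apply (Hm K b); auto. split; auto. apply Rmin_r.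
 - apply (Hm k a); auto. split; auto. apply Rmin_l. apply Hk. lia. Qed.

Lemma per_nat (g : R -> R) (T : R) : (forall x, g (x + T) = g x) -> forall n x, g (x + INR n * T) = g x.
Proof. intros H n; induction n; intros x. simpl. rewrite Rmult_0_l, Rplus_0_r; auto.
 rewrite S_INR. replace (x + (INR n + 1) * T) with ((x + INR n * T) + T) by ring. rewrite H; auto. Qed.

Lemma per_Z (g : R -> R) (T : R) : (forall x, g (x + T) = g x) -> forall (n : Z) x, g (x + IZR n * T) = g x.
Proof. intros H n x. destruct (Z_le_gt_dec 0 n).
 - rewrite <- (Z2Nat.id n) by auto. rewrite <- INR_IZR_INZ. apply per_nat; auto.
 - replace n with (- Z.of_nat (Z.to_nat (- n)))%Z by lia. rewrite opp_IZR, <- INR_IZR_INZ.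
   rewrite <- (per_nat g T H (Z.to_nat (-n)) (x + - INR (Z.to_nat (- n)) * T)). f_equal; ring. Qed.

Lemma sum_f_sumn f n : sum_f_R0 f n = sumn f (S n).
Proof. induction n; simpl. ring. simpl in IHn. rewrite IHn. ring. Qed.

Lemma sumn_shift f d : sumn f (S d) = f O + sumn (fun k => f (S k)) d.
Proof. induction d. simpl; ring. change (sumn f (S (S d))) with (sumn f (S d) + f (S d)). rewrite IHd. simpl. ring. Qed.

Lemma Q2R_Z z : Q2R (inject_Z z) = IZR z.
Proof. unfold Q2R; simpl. rewrite Rinv_1. ring. Qed.

Theorem lemma19 (K : nat) (a : nat -> R) (g : R -> R) (T x1 x2 M1 M2 : R) :
  (0 < K)%nat ->
  rat_independent K a ->
  (forall x, g (x + T) = g x) ->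
  0 < x2 - x1 -> x2 - x1 < T ->
  continuous_on_interval g x1 x2 ->
  (* M1 = min_{[x1,x2]} g, M2 = max_{[x1,x2]} g *)
  (exists y, x1 <= y <= x2 /\ g y = M1) ->
  (forall y, x1 <= y <= x2 -> M1 <= g y) ->
  (exists y, x1 <= y <= x2 /\ g y = M2) ->
  (forall y, x1 <= y <= x2 -> g y <= M2) ->
  forall (xi : nat -> R), (forall k, (k < K)%nat -> M1 <= xi k <= M2) ->
  forall eps, eps > 0 ->
  exists w : R, forall k, (k < K)%nat -> Rabs (g (w * a k) - xi k) < eps.
Proof.
 intros HK Hind Hper H12 HT Hc [y1 [Hy1 Hg1]] _ [y2 [Hy2 Hg2]] _ xi Hxi eps Heps.
 destruct K as [|d]; [lia|]. 
 assert (Ht : forall k, exists t, (k < S d)%nat -> x1 < t < x2 /\ Rabs (g t - xi k) < eps / 2).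
 { intros k. destruct (lt_dec k (S d)) as [Hk|Hk]; [|exists 0; intros; lia].
   destruct (exists_val g x1 x2 y1 y2 (xi k)) as [y [Hy Hgy]]; try lra; auto.
   rewrite Hg1, Hg2; apply Hxi; auto.
   destruct (interior_pt g x1 x2 y (eps/2)) as [t [Htt Hgt]]; try lra; auto.
   exists t; intros _; split; auto. rewrite <- Hgy; auto. }
 set (t := fun k => proj1_sig (constructive_indefinite_description _ (Ht k))).
 assert (Htk : forall k, (k < S d)%nat -> x1 < t k < x2 /\ Rabs (g (t k) - xi k) < eps / 2).
 { intros k. unfold t. destruct (constructive_indefinite_description _ _) as [tk Hk]. simpl. exact Hk. }
 destruct (fin_min (fun k de => de <= t k - x1 /\ de <= x2 - t k /\
    forall y, x1 <= y <= x2 -> Rabs (y - t k) < de -> Rabs (g y - g (t k)) < eps / 2)) with (K := S d)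
   as [de [Hde Hdek]].
 { intros k u u' [Hu' Hu] [A [B C]]. split; [lra|split; [lra|]]. intros y Hy Hyd. apply C; auto. lra. }
 { intros k Hk. destruct (Htk k Hk) as [[A B] _].
   destruct (Hc (t k) ltac:(lra) (eps/2) ltac:(lra)) as [u [Hu Hu2]].
   exists (Rmin u (Rmin (t k - x1) (x2 - t k))).
   assert (Hm1 := Rmin_l u (Rmin (t k - x1) (x2 - t k))).
   assert (Hm2 := Rmin_r u (Rmin (t k - x1) (x2 - t k))).
   assert (Hm3 := Rmin_l (t k - x1) (x2 - t k)).
   assert (Hm4 := Rmin_r (t k - x1) (x2 - t k)).
   split. apply Rmin_glb_lt; auto. apply Rmin_glb_lt; lra.
   split. lra. split. lra. intros y Hy Hyd. apply Hu2; auto. lra. }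
 assert (Ha0 : a 0%nat <> 0).
 { intros E. set (lam := fun k : nat => match k with O => inject_Z 1 | S _ => inject_Z 0 end).
   assert (Hs : sum_f_R0 (fun k => Q2R (lam k) * a k) (S d - 1) = 0).
   { replace (S d - 1)%nat with d by lia. rewrite sum_f_sumn, sumn_shift. simpl lam. rewrite E.
     rewrite sumn_zero. rewrite Q2R_Z; ring. intros; rewrite Q2R_Z; ring. }
   specialize (Hind lam Hs 0%nat ltac:(lia)). simpl in Hind. rewrite Q2R_Z in Hind. lra. }
 set (b := fun k => a (S k) / a 0%nat).
 assert (Hb : nonres d b).
 { intros c [j [Hj Hcj]] n E.
   set (lam := fun k : nat => match k with O => inject_Z (- n) | S k' => inject_Z (c k') end).
   assert (Hs : sum_f_R0 (fun k => Q2R (lam k) * a k) (S d - 1) = 0).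
   { replace (S d - 1)%nat with d by lia. rewrite sum_f_sumn, sumn_shift. simpl lam.
     unfold dot, b in E.
     rewrite (sumn_ext _ (fun k => / a 0%nat * (IZR (c k) * a (S k)))) in E by (intros; field; auto).
     rewrite sumn_scal in E.
     rewrite (sumn_ext _ (fun k => IZR (c k) * a (S k))) by (intros; rewrite Q2R_Z; auto).
     rewrite Q2R_Z, opp_IZR.
     apply (Rmult_eq_compat_l (a 0%nat)) in E. rewrite <- Rmult_assoc, Rinv_r, Rmult_1_l in E by auto.
     rewrite E. ring. }
   specialize (Hind lam Hs (S j) ltac:(lia)). simpl in Hind. rewrite Q2R_Z in Hind.
   apply Hcj. apply eq_IZR; auto. }
 assert (HT0 : 0 < T) by lra.
 set (z := fun k => (t 0%nat * b k - t (S k)) / T).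
 destruct (DK d b Hb z (de / T)) as [m Hm]. apply Rdiv_lt_0_compat; auto.
 exists ((t 0%nat + INR m * T) / a 0%nat).
 intros k Hk. destruct k as [|j].
 - replace ((t 0%nat + INR m * T) / a 0%nat * a 0%nat) with (t 0%nat + INR m * T) by (field; auto).
   rewrite per_nat; auto. destruct (Htk 0%nat Hk). lra.
 - destruct (Hm j ltac:(lia)) as [n Hn].
   set (e := INR m * b j + z j - IZR n) in *.
   replace ((t 0%nat + INR m * T) / a 0%nat * a (S j)) with ((t (S j) + T * e) + IZR n * T).
   2:{ unfold e, z, b. field. split; auto. lra. }
   rewrite per_Z; auto.
   destruct (Hdek (S j) Hk) as [A [B C]].
   destruct (Htk (S j) Hk) as [_ D].
   assert (Hte : Rabs (T * e) < de).
   { rewrite Rabs_mult, Rabs_pos_eq by lra. apply (Rmult_lt_compat_l T) in Hn; auto.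
     replace (T * (de / T)) with de in Hn by (field; lra). auto. }
   assert (Rabs (g (t (S j) + T * e) - g (t (S j))) < eps / 2).
   { apply C. apply Rabs_def2 in Hte. lra. replace (t (S j) + T * e - t (S j)) with (T * e) by ring. auto. }
   pose proof (Rabs_triang (g (t (S j) + T * e) - g (t (S j))) (g (t (S j)) - xi (S j))).
   replace (g (t (S j) + T * e) - g (t (S j)) + (g (t (S j)) - xi (S j))) with (g (t (S j) + T * e) - xi (S j)) in H0 by ring.
   lra. Qed.
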